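(* Let $\mathcal{U}$ be a finite set, $\mathbf{a} \in \mathbb{Z}_{\geq 0}^{\mathcal{U}}$ with $F_1 = \sum_{i\in\mathcal{U}} \mathbf{a}_i > 0$, let $k > 0$ with $HH(k) = |\{i \in \mathcal{U} : \mathbf{a}_i \geq F_1/k\}| \geq 1$, let $h$ be a positive integer and $\delta \in (0,1)$. Let $f : \mathcal{U} \to [h]$ be a uniformly random function and \[ \tilde k = \big|\{ j \in [h] : \exists\, i \in f^{-1}(j) \text{ with } \mathbf{a}_i \geq F_1/k \}\big| . \] Then with probability at least $1-\delta$, \[ \frac{\tilde k}{HH(k)} \geq 1 - \frac{k}{\delta h}. \]
   Context: $[h] = \{1,\dots,h\}$. A uniformly random function assigns each element of $\mathcal{U}$ an independent uniform value in $[h]$. *)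

(* Defs.v *)
From HB Require Import structures.
From mathcomp Require Import all_boot all_order all_algebra.
Set Implicit Arguments. Unset Strict Implicit. Unset Printing Implicit Defensive.
Import Order.TTheory GRing.Theory Num.Theory.
Local Open Scope ring_scope.

Definition F1 (U : finType) (a : U -> nat) : nat := (\sum_(i : U) a i)%N.

Definition heavy (R : realFieldType) (U : finType) (a : U -> nat) (k : R) (i : U) : bool :=
  (F1 a)%:R / k <= (a i)%:R.

Definition HH (R : realFieldType) (U : finType) (a : U -> nat) (k : R) : nat :=
  #|[set i : U | heavy a k i]|.

Definition ktilde (R : realFieldType) (U : finType) (a : U -> nat) (k : R) (h : nat)
  (f : {ffun U -> 'I_h}) : nat :=
  #|[set j : 'I_h | [exists i : U, (f i == j) && heavy a k i]]|.

Definition unif_prob (R : realFieldType) (U : finType) (h : nat)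
  (E : pred {ffun U -> 'I_h}) : R :=
  #|[set f | E f]|%:R / #|{ffun U -> 'I_h}|%:R.

(* Main.v *)
Require Import Defs.
From HB Require Import structures.
From mathcomp Require Import all_boot all_order all_algebra all_fingroup.
From mathcomp Require Import lra ring.
Import Order.TTheory GRing.Theory Num.Theory.

Lemma pair_sum (U : finType) h (i j : U) : i != j ->
  (h * \sum_(g : {ffun U -> 'I_h}) (g i == g j : nat) = #|{ffun U -> 'I_h}|)%N.
Proof.
move=> nij.
have E c : (\sum_(g : {ffun U -> 'I_h}) (g i == g j : nat) =
            \sum_(g : {ffun U -> 'I_h}) (g j == c : nat))%N.
  pose phi (g : {ffun U -> 'I_h}) : {ffun U -> 'I_h} :=
    [ffun x => if x == j then tperm (g i) c (g j) else g x].
  have phiK : involutive phi.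
    move=> g; apply/ffunP=> x; rewrite !ffunE.
    case: eqP => [->|//]; by rewrite (negbTE nij) eqxx tpermK.
  rewrite (reindex_inj (inv_inj phiK)) /=; apply: eq_bigr => g _.
  rewrite /phi !ffunE (negbTE nij) eqxx.
  by rewrite -(inj_eq (@perm_inj _ (tperm (g i) c))) tpermL tpermK eq_sym.
transitivity (\sum_(c < h) \sum_(g : {ffun U -> 'I_h}) (g j == c : nat))%N.
  by rewrite -(eq_bigr _ (fun c _ => E c)) sum_nat_const card_ord.
rewrite exchange_big /= -sum1_card; apply: eq_bigr => g _.
by rewrite (bigD1 (g j)) //= eqxx big1 // => c /negbTE; rewrite eq_sym => ->.
Qed.

Lemma collide (U : finType) h (H : {set U}) (f : {ffun U -> 'I_h}) :
  (#|H| <= #|[set j : 'I_h | [exists i : U, (f i == j) && (i \in H)]]| +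
     \sum_(i in H) \sum_(j in H | j != i) (f i == f j : nat))%N.
Proof.
set Y := [set i | (i \in H) && [exists j, [&& j \in H, j != i & f j == f i]]].
have YH : Y \subset H by apply/subsetP=> i; rewrite inE => /andP[].
rewrite -(cardsID Y H) (setIidPr YH) addnC leq_add //.
  have -> : #|H :\: Y| = #|f @: (H :\: Y)|.
    rewrite card_in_imset // => x y; rewrite !inE => /andP[xY xH] /andP[yY yH] fxy.
    apply/eqP; apply: contraT => nxy; exfalso; move/negP: xY; apply.
    by rewrite xH /=; apply/existsP; exists y; rewrite yH eq_sym nxy fxy eqxx.
  apply: subset_leq_card; apply/subsetP=> z /imsetP[x]; rewrite !inE => /andP[_ xH] ->.
  by apply/existsP; exists x; rewrite eqxx xH.
rewrite -sum1_card [X in (_ <= X)%N]big_mkcond [X in (X <= _)%N]big_mkcond.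
apply: leq_sum => i _; case: (boolP (i \in Y)) => // iY.
move: (iY); rewrite inE => /andP[-> /existsP[j]].
case/and3P=> jH nji fji.
rewrite (bigD1 j) /=; first by rewrite (eqP fji) eqxx.
by rewrite jH nji.
Qed.

Local Open Scope ring_scope.

Theorem lemma6 (R : realFieldType) (U : finType) (a : U -> nat) (k : R) (h : nat)
  (delta : R) :
  (0 < F1 a)%N -> 0 < k -> (1 <= HH a k)%N -> (0 < h)%N ->
  0 < delta -> delta < 1 ->
  1 - delta <=
    unif_prob R
      (fun f : {ffun U -> 'I_h} =>
         1 - k / (delta * h%:R) <= (ktilde a k f)%:R / (HH a k)%:R).
Proof.
move=> F1gt0 kgt0 HHgt0 hgt0 dgt0 dlt1.
set H := [set i | heavy a k i].
have HHE : HH a k = #|H| by [].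
set m := #|H|.
set D := fun f : {ffun U -> 'I_h} =>
  (\sum_(i in H) \sum_(j in H | j != i) (f i == f j : nat))%N.
have mk : (m%:R : R) <= k.
  have F1R : (0 : R) < (F1 a)%:R by rewrite ltr0n.
  have : m%:R * ((F1 a)%:R / k) <= (F1 a)%:R :> R.
    rewrite mulr_natl -sumr_const.
    apply: (@le_trans _ _ (\sum_(i in H) (a i)%:R)).
      by apply: ler_sum => i; rewrite inE.
    rewrite /F1 natr_sum [X in _ <= X](bigID (mem H)) /= lerDl.
    by apply: sumr_ge0 => i _; rewrite ler0n.
  rewrite mulrA ler_pdivrMr // => H1.
  by rewrite -(ler_pM2r F1R) [k * _]mulrC.
have Ngt0 : (0 < #|{ffun U -> 'I_h}|)%N.
  by apply/card_gt0P; exists [ffun=> Ordinal hgt0].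
set N := #|{ffun U -> 'I_h}| in Ngt0 *.
have sumD : (h * \sum_f D f <= m * m * N)%N.
  rewrite /D exchange_big big_distrr /= -mulnA -sum_nat_const.
  apply: leq_sum => i iH.
  rewrite exchange_big big_distrr /= -sum_nat_const big_mkcondr /=.
  apply: leq_sum => j jH; case: eqP => [->|/eqP nji] //.
  by rewrite (@pair_sum _ _ i j) // eq_sym.
set x := delta * h%:R.
have xgt0 : 0 < x by rewrite mulr_gt0 // ltr0n.
have mgt0 : (0 : R) < m%:R by rewrite ltr0n.
set E := (fun f : {ffun U -> 'I_h} =>
         1 - k / x <= (ktilde a k f)%:R / (HH a k)%:R).
set B := ~: [set f | E f].
have bad f : f \in B -> (m * m)%:R < x * (D f)%:R :> R.
  rewrite !inE /E HHE -/m -ltNge ltr_pdivrMr // mulrBl mul1r => H1.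
  have H2 := @collide _ _ H f.
  have H3 : (ktilde a k f)%:R + (D f)%:R >= m%:R :> R.
    rewrite -natrD ler_nat; apply: (leq_trans H2); rewrite leq_add2r.
    apply: subset_leq_card; apply/subsetP=> j; rewrite !inE => /existsP[i /andP[fi iH]].
    by apply/existsP; exists i; rewrite fi; rewrite inE in iH.
  have H4 : k / x * m%:R < (D f)%:R by rewrite -[_ / x * _]opprK; lra.
  rewrite mulrAC ltr_pdivrMr // in H4.
  rewrite natrM (@le_lt_trans _ _ (k * m%:R)) //; first by rewrite ler_pM2r.
  by rewrite [x * _]mulrC.
have cardB : #|B|%:R <= delta * N%:R :> R.
  have : #|B|%:R * (m * m)%:R <= x * (\sum_f D f)%:R :> R.
    rewrite mulr_natl -sumr_const natr_sum mulr_sumr.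
    apply: (@le_trans _ _ (\sum_(f in B) x * (D f)%:R)).
      by apply: ler_sum => f /bad /ltW.
    rewrite [X in _ <= X](bigID (mem B)) /= lerDl.
    by apply: sumr_ge0 => f _; rewrite mulr_ge0 // ltW.
  have : (h * \sum_f D f)%:R <= (m * m * N)%:R :> R by rewrite ler_nat.
  rewrite /x !natrM => S1 S2.
  have hR : (0 : R) < h%:R by rewrite ltr0n.
  have S3 : #|B|%:R * (m%:R * m%:R) <= delta * (m%:R * m%:R * N%:R) :> R.
    apply: (le_trans S2); rewrite -mulrA ler_pM2l //.
  rewrite -(ler_pM2r (_ : 0 < m%:R * m%:R)); last by rewrite mulr_gt0.
  have -> : delta * N%:R * (m%:R * m%:R) = delta * (m%:R * m%:R * N%:R) :> R by ring.
  exact: S3.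
rewrite /unif_prob -/N.
have -> : #|[set f | E f]| = (N - #|B|)%N.
  have HC : (#|[set f | E f]| + #|B| = N)%N by exact: cardsC.
  by rewrite -HC addnK.
have BN : (#|B| <= N)%N by apply: max_card.
rewrite ler_pdivlMr ?ltr0n // natrB //.
nra.
Qed.
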